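(* Let $\mathrm{M}$ be the 2-space group $\ast333$ (IT number 14, $p3m1$), so that $E^2/\mathrm{M}$ is an equilateral triangle. Let t-ref. be the symmetry of $E^2/\mathrm{M}$ given by reflection in the perpendicular bisector of a side, and 3-rot. the rotation by $120^\circ$ about the center of the triangle. Then $\mathrm{Sym}(\mathrm{M})$ is the dihedral group $\langle \text{t-ref.}, \text{3-rot.}\rangle$ of order 6, $\mathrm{Sym}(\mathrm{M})=\mathrm{Aff}(\mathrm{M})$, and $\Omega:\mathrm{Aff}(\mathrm{M})\to\mathrm{Out}(\mathrm{M})$ is an isomorphism.
   Context: A 2-space group is a discrete group of isometries of $E^2$ with compact quotient. Affine maps of $E^2$ are written $a+A$ ($x\mapsto a+Ax$). For a 2-space group $\mathrm{M}$, let $N_A(\mathrm{M})$ be its normalizer in the affine group of $E^2$; each $a+A\in N_A(\mathrm{M})$ induces an affinity $(a+A)_\star:\mathrm{M}x\mapsto\mathrm{M}(a+Ax)$ of the flat orbifold $E^2/\mathrm{M}$. $\mathrm{Aff}(\mathrm{M})$ is the group of all such affinities and $\mathrm{Sym}(\mathrm{M})=\mathrm{Isom}(E^2/\mathrm{M})$ its subgroup of isometries. $\Omega:\mathrm{Aff}(\mathrm{M})\to\mathrm{Out}(\mathrm{M})$ sends $(a+A)_\star$ to the outer automorphism class of $g\mapsto(a+A)g(a+A)^{-1}$ on $\mathrm{M}$. *)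

(* Defs.v *)
From mathcomp Require Import all_boot all_order all_algebra.
From mathcomp Require Import all_classical all_reals.
Set Implicit Arguments. Unset Strict Implicit. Unset Printing Implicit Defensive.
Import Order.TTheory GRing.Theory Num.Theory.
Local Open Scope ring_scope.

Section Defs.
Variable R : realType.

Definition pt := 'cV[R]_2.
Definition aff := ('cV[R]_2 * 'M[R]_2)%type.

Definition vec2 (x y : R) : pt := \col_(i < 2) (if i == 0 :> nat then x else y).
Definition mx2 (a b c d : R) : 'M[R]_2 :=
  \matrix_(i < 2, j < 2)
    (if i == 0 :> nat then (if j == 0 :> nat then a else b)
     else (if j == 0 :> nat then c else d)).

Definition app (g : aff) (x : pt) : pt := g.1 + g.2 *m x.
Definition amul (g h : aff) : aff := (g.1 + g.2 *m h.1, g.2 *m h.2).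
Definition aone : aff := (0, 1%:M).
Definition ainv (g : aff) : aff := (- (invmx g.2 *m g.1), invmx g.2).
Definition apow (g : aff) (n : nat) : aff := iter n (amul g) aone.
Definition is_affine (g : aff) : Prop := g.2 \in unitmx.

Definition enorm (x : pt) : R := Num.sqrt (x 0 0 ^+ 2 + x 1 0 ^+ 2).

(* reflection in the line through p with unit direction u:  x |-> p + (2uu^T - I)(x - p) *)
Definition refl (p u : pt) : aff :=
  let A := (2%:R *: (u *m u^T)) - 1%:M in (p - A *m p, A).
(* the map x |-> c + A (x - c) *)
Definition about (c : pt) (A : 'M[R]_2) : aff := (c - A *m c, A).

Definition s3 : R := Num.sqrt 3.

Definition P0 : pt := vec2 0 0.
Definition P1 : pt := vec2 1 0.
Definition P2 : pt := vec2 (1/2) (s3/2).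

Definition r01 : aff := refl P0 (vec2 1 0).
Definition r02 : aff := refl P0 (vec2 (1/2) (s3/2)).
Definition r12 : aff := refl P1 (vec2 (-(1/2)) (s3/2)).

Inductive gen_by (S : aff -> Prop) : aff -> Prop :=
| gen_in g : S g -> gen_by S g
| gen_one : gen_by S aone
| gen_mul g h : gen_by S g -> gen_by S h -> gen_by S (amul g h)
| gen_inv g : gen_by S g -> gen_by S (ainv g).

(* M = *333 = p3m1: the group generated by the reflections in the sides of an
   equilateral triangle; its quotient E^2/M is that triangle *)
Definition inM : aff -> Prop := gen_by (fun g => g = r01 \/ g = r02 \/ g = r12).

Definition aconj (g m : aff) : aff := amul (amul g m) (ainv g).

Definition inNA (g : aff) : Prop :=
  is_affine g /\ (forall m, inM m <-> inM (aconj g m)).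

Definition orbeq (x y : pt) : Prop := exists m, inM m /\ app m y = x.

(* (a+A)_* = (b+B)_* as maps of the orbifold E^2/M *)
Definition aff_eq (g h : aff) : Prop := forall x, orbeq (app g x) (app h x).

Definition odist (x y : pt) : R :=
  inf [set r | exists m, inM m /\ r = enorm (x - app m y)].

Definition induces_isometry (g : aff) : Prop :=
  forall x y, odist (app g x) (app g y) = odist x y.

Definition is_autM (phi : aff -> aff) : Prop :=
  [/\ (forall m, inM m -> inM (phi m)),
      (forall m1 m2, inM m1 -> inM m2 -> phi (amul m1 m2) = amul (phi m1) (phi m2)),
      (forall m1 m2, inM m1 -> inM m2 -> phi m1 = phi m2 -> m1 = m2) &
      (forall n, inM n -> exists m, inM m /\ phi m = n)].

(* phi and psi define the same element of Out(M) *)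
Definition out_eq (phi psi : aff -> aff) : Prop :=
  exists k, inM k /\ forall m, inM m -> phi m = aconj k (psi m).

(* t-ref.: reflection in the perpendicular bisector x = 1/2 of the side P0P1 *)
Definition tref : aff := refl (vec2 (1/2) 0) (vec2 0 1).
(* 3-rot.: rotation by 120 degrees about the centre of the triangle *)
Definition rot3 : aff := about (vec2 (1/2) (s3/6)) (mx2 (-(1/2)) (-(s3/2)) (s3/2) (-(1/2))).

End Defs.

(* Main.v *)
Require Import Defs.
From mathcomp Require Import all_boot all_order all_algebra.
From mathcomp Require Import all_classical all_reals.
From mathcomp Require Import ring lra zify.
Import Order.TTheory GRing.Theory Num.Theory.
Local Open Scope ring_scope.
Set Implicit Arguments. Unset Strict Implicit. Unset Printing Implicit Defensive.


Section W1.
Variable R : realType.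

Lemma s3s : s3 R * s3 R = 3.
Proof. by rewrite /s3 -expr2 sqr_sqrtr // ler0n. Qed.
Lemma s3_neq0 : s3 R != 0.
Proof. apply/eqP => h; have := s3s; rewrite h mul0r => /eqP; by rewrite eq_sym pnatr_eq0. Qed.

Definition Sv (x y : R) : pt R := vec2 x (s3 R * y).
Definition Sm (a b c d : R) : 'M[R]_2 := mx2 a (s3 R * b) (s3 R * c) d.

Lemma sum2 (F : 'I_2 -> R) : \sum_(k < 2) F k = F 0 + F 1.
Proof. rewrite big_ord_recl big_ord_recl big_ord0 addr0 /=. congr (F _ + F _); exact: val_inj. Qed.

Lemma ord2P (i : 'I_2) : i = 0 \/ i = 1.
Proof. case: i => [[|[|k]] Hk]; [left; exact: val_inj|right; exact: val_inj|by []]. Qed.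

Lemma vec2_eta (v : pt R) : v = vec2 (v 0 0) (v 1 0).
Proof.
apply/matrixP => i j; rewrite !mxE; have -> : j = 0 by apply: ord1.
by case: (ord2P i) => ->.
Qed.

Lemma mx2_eta (A : 'M[R]_2) : A = mx2 (A 0 0) (A 0 1) (A 1 0) (A 1 1).
Proof.
by apply/matrixP => i j; rewrite !mxE; case: (ord2P i) => ->; case: (ord2P j) => ->.
Qed.

Lemma vec2_inj (x y x' y' : R) : vec2 x y = vec2 x' y' -> x = x' /\ y = y'.
Proof.
move=> /matrixP h; split; [have := h 0 0|have := h 1 0]; by rewrite !mxE.
Qed.

Lemma mx2_inj (a b c d a' b' c' d' : R) : mx2 a b c d = mx2 a' b' c' d' ->
  [/\ a = a', b = b', c = c' & d = d'].
Proof.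
move=> /matrixP h; split; [have := h 0 0|have := h 0 1|have := h 1 0|have := h 1 1];
 by rewrite !mxE.
Qed.

Lemma mx2_mul (a b c d a' b' c' d' : R) :
  mx2 a b c d *m mx2 a' b' c' d' =
  mx2 (a*a' + b*c') (a*b' + b*d') (c*a' + d*c') (c*b' + d*d').
Proof.
apply/matrixP => i j; rewrite !mxE sum2 !mxE;
by case: (ord2P i) => ->; case: (ord2P j) => ->.
Qed.

Lemma mx2_mulv (a b c d x y : R) :
  mx2 a b c d *m vec2 x y = vec2 (a*x + b*y) (c*x + d*y).
Proof.
apply/matrixP => i j; rewrite !mxE sum2 !mxE.
by case: (ord2P i) => ->.
Qed.

Lemma vec2_add x y x' y' : vec2 x y + vec2 x' y' = vec2 (x + x') (y + y') :> pt R.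
Proof. by apply/matrixP => i j; rewrite !mxE; case: (ord2P i) => ->. Qed.
Lemma vec2_opp x y : - vec2 x y = vec2 (- x) (- y) :> pt R.
Proof. by apply/matrixP => i j; rewrite !mxE; case: (ord2P i) => ->. Qed.
Lemma vec2_scale k x y : k *: vec2 x y = vec2 (k * x) (k * y) :> pt R.
Proof. by apply/matrixP => i j; rewrite !mxE; case: (ord2P i) => ->. Qed.
Lemma mx2_scale k a b c d : k *: mx2 a b c d = mx2 (k*a) (k*b) (k*c) (k*d) :> 'M[R]_2.
Proof. by apply/matrixP => i j; rewrite !mxE; case: (ord2P i) => ->; case: (ord2P j) => ->. Qed.
Lemma mx2_1 : 1%:M = mx2 1 0 0 1 :> 'M[R]_2.
Proof. by apply/matrixP => i j; rewrite !mxE; case: (ord2P i) => ->; case: (ord2P j) => ->. Qed.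
Lemma vec2_0 : 0 = vec2 0 0 :> pt R.
Proof. by apply/matrixP => i j; rewrite !mxE; case: (ord2P i) => ->. Qed.
Lemma mx2_0 : 0 = mx2 0 0 0 0 :> 'M[R]_2.
Proof. by apply/matrixP => i j; rewrite !mxE; case: (ord2P i) => ->; case: (ord2P j) => ->. Qed.
Lemma mx2_add a b c d a' b' c' d' : mx2 a b c d + mx2 a' b' c' d' = mx2 (a+a') (b+b') (c+c') (d+d') :> 'M[R]_2.
Proof. by apply/matrixP => i j; rewrite !mxE; case: (ord2P i) => ->; case: (ord2P j) => ->. Qed.
Lemma mx2_opp a b c d : - mx2 a b c d = mx2 (-a) (-b) (-c) (-d) :> 'M[R]_2.
Proof. by apply/matrixP => i j; rewrite !mxE; case: (ord2P i) => ->; case: (ord2P j) => ->. Qed.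
Lemma vec2_tr (x y : R) : (vec2 x y)^T = \row_(j < 2) (if j == 0 :> nat then x else y) :> 'rV[R]_2.
Proof. by apply/matrixP => i j; rewrite !mxE. Qed.
Lemma vec2_outer (x y : R) : vec2 x y *m (vec2 x y)^T = mx2 (x*x) (x*y) (y*x) (y*y).
Proof.
apply/matrixP => i j; rewrite !mxE big_ord1 !mxE.
by case: (ord2P i) => ->; case: (ord2P j) => ->.
Qed.

Lemma Sv_eta (v : pt R) : v = Sv (v 0 0) (v 1 0 / s3 R).
Proof. by rewrite /Sv mulrC divfK ?s3_neq0 // -vec2_eta. Qed.
Lemma Sm_eta (A : 'M[R]_2) : A = Sm (A 0 0) (A 0 1 / s3 R) (A 1 0 / s3 R) (A 1 1).
Proof. by rewrite /Sm !(mulrC (s3 R)) !divfK ?s3_neq0 // -mx2_eta. Qed.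

Lemma Sv_inj x y x' y' : Sv x y = Sv x' y' -> x = x' /\ y = y'.
Proof.
move=> /vec2_inj [-> h]; split => //; apply: (mulfI s3_neq0) h.
Qed.
Lemma Sm_inj a b c d a' b' c' d' : Sm a b c d = Sm a' b' c' d' ->
  [/\ a = a', b = b', c = c' & d = d'].
Proof.
move=> /mx2_inj [-> h1 h2 ->]; split => //; exact: (mulfI s3_neq0).
Qed.

Lemma Sm_mul a b c d a' b' c' d' :
  Sm a b c d *m Sm a' b' c' d' =
  Sm (a*a' + 3*b*c') (a*b' + b*d') (c*a' + d*c') (3*c*b' + d*d').
Proof.
rewrite /Sm mx2_mul; have h := s3s; congr mx2.
- by rewrite -h; ring.
- by ring.
- by ring.
- by rewrite -h; ring.
Qed.

Lemma Sm_mulv a b c d x y :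
  Sm a b c d *m Sv x y = Sv (a*x + 3*b*y) (c*x + d*y).
Proof.
rewrite /Sm /Sv mx2_mulv; have h := s3s; congr vec2.
- by rewrite -h; ring.
- by ring.
Qed.

Lemma Sv_add x y x' y' : Sv x y + Sv x' y' = Sv (x + x') (y + y').
Proof. by rewrite /Sv vec2_add mulrDr. Qed.
Lemma Sv_opp x y : - Sv x y = Sv (- x) (- y).
Proof. by rewrite /Sv vec2_opp mulrN. Qed.
Lemma Sv_sub x y x' y' : Sv x y - Sv x' y' = Sv (x - x') (y - y').
Proof. by rewrite Sv_opp Sv_add. Qed.
Lemma Sv_scale k x y : k *: Sv x y = Sv (k * x) (k * y).
Proof. by rewrite /Sv vec2_scale mulrCA. Qed.
Lemma Sm_scale k a b c d : k *: Sm a b c d = Sm (k*a) (k*b) (k*c) (k*d).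
Proof. by rewrite /Sm mx2_scale !(mulrCA k). Qed.
Lemma Sm_1 : 1%:M = Sm 1 0 0 1.
Proof. by rewrite /Sm !mulr0 mx2_1. Qed.
Lemma Sv_0 : 0 = Sv 0 0.
Proof. by rewrite /Sv mulr0 vec2_0. Qed.
Lemma Sm_add a b c d a' b' c' d' : Sm a b c d + Sm a' b' c' d' = Sm (a+a') (b+b') (c+c') (d+d').
Proof. by rewrite /Sm mx2_add !mulrDr. Qed.
Lemma Sm_opp a b c d : - Sm a b c d = Sm (-a) (-b) (-c) (-d).
Proof. by rewrite /Sm mx2_opp !mulrN. Qed.

Lemma Sm_eq a b c d a' b' c' d' : a = a' -> b = b' -> c = c' -> d = d' ->
  Sm a b c d = Sm a' b' c' d'.
Proof. by move=> -> -> -> ->. Qed.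
Lemma Sv_eq x y x' y' : x = x' -> y = y' -> Sv x y = Sv x' y'.
Proof. by move=> -> ->. Qed.

Lemma inv_right (A X : 'M[R]_2) : A *m X = 1%:M -> invmx A = X.
Proof.
move=> h; have [uA _] := mulmx1_unit h.
by rewrite -[invmx A]mulmx1 -h mulmxA mulVmx // mul1mx.
Qed.

Lemma Sm_unit a b c d : a*d - 3*b*c != 0 -> Sm a b c d \in unitmx.
Proof.
move=> h; set D := a*d - 3*b*c.
have := (@mulmx1_unit _ _ (Sm a b c d) (Sm (d/D) (-b/D) (-c/D) (a/D))).
case => //; rewrite Sm_mul Sm_1; apply: Sm_eq; rewrite /D; field; exact: h.
Qed.

Lemma Sm_inv a b c d : a*d - 3*b*c != 0 ->
  invmx (Sm a b c d) = Sm (d/(a*d - 3*b*c)) (-b/(a*d - 3*b*c)) (-c/(a*d - 3*b*c)) (a/(a*d - 3*b*c)).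
Proof.
move=> h; apply: inv_right; rewrite Sm_mul Sm_1; apply: Sm_eq; field; exact: h.
Qed.

End W1.


Section W2.
Variable R : realType.
Implicit Types g h k m n : aff R.

Lemma app_amul g h x : app (amul g h) x = app g (app h x).
Proof. by rewrite /app /amul /= mulmxDr mulmxA addrA. Qed.
Lemma app_aone x : app (aone R) x = x.
Proof. by rewrite /app /aone /= mul1mx add0r. Qed.

Lemma amulA g h k : amul (amul g h) k = amul g (amul h k).
Proof. by rewrite /amul /= mulmxDr !mulmxA addrA. Qed.
Lemma amul1g g : amul (aone R) g = g.
Proof. by case: g => a A; rewrite /amul /aone /= !mul1mx add0r. Qed.
Lemma amulg1 g : amul g (aone R) = g.
Proof. by case: g => a A; rewrite /amul /aone /= mulmx0 addr0 mulmx1. Qed.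

Lemma amulV g : is_affine g -> amul g (ainv g) = aone R.
Proof.
case: g => a A; rewrite /is_affine /amul /ainv /aone /= => u.
by rewrite mulmxN mulKVmx // subrr mulmxV.
Qed.
Lemma amulVg g : is_affine g -> amul (ainv g) g = aone R.
Proof.
case: g => a A; rewrite /is_affine /amul /ainv /aone /= => u.
by rewrite mulVmx // addrC subrr.
Qed.
Lemma ainv_affine g : is_affine g -> is_affine (ainv g).
Proof. by rewrite /is_affine /= unitmx_inv. Qed.
Lemma amul_affine g h : is_affine g -> is_affine h -> is_affine (amul g h).
Proof. by rewrite /is_affine /= unitmx_mul => -> ->. Qed.
Lemma aone_affine : is_affine (aone R).
Proof. exact: unitmx1. Qed.

Lemma ainv_uniq g h : is_affine g -> amul g h = aone R -> h = ainv g.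
Proof.
move=> u e; by rewrite -[h]amul1g -(amulVg u) amulA e amulg1.
Qed.
Lemma ainvK g : is_affine g -> ainv (ainv g) = g.
Proof. move=> u; symmetry; apply: ainv_uniq; [exact: ainv_affine|exact: amulVg]. Qed.
Lemma ainv_amul g h : is_affine g -> is_affine h ->
  ainv (amul g h) = amul (ainv h) (ainv g).
Proof.
move=> u v; symmetry; apply: ainv_uniq; first exact: amul_affine.
by rewrite amulA -[amul h (amul (ainv h) _)]amulA amulV // amul1g amulV.
Qed.
Lemma ainv1 : ainv (aone R) = aone R.
Proof. symmetry; apply: ainv_uniq; [exact: aone_affine|exact: amul1g]. Qed.

Lemma aconj_mul g m n : is_affine g ->
  aconj g (amul m n) = amul (aconj g m) (aconj g n).
Proof.
move=> u; rewrite /aconj !amulA.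
by rewrite -[amul (ainv g) (amul g _)]amulA amulVg // amul1g.
Qed.
Lemma aconj_inv g m : is_affine g -> is_affine m ->
  aconj g (ainv m) = ainv (aconj g m).
Proof.
move=> u v; rewrite /aconj !ainv_amul ?ainvK ?amulA //;
 by repeat apply: amul_affine => //; apply: ainv_affine.
Qed.
Lemma aconj_comp g h m : is_affine g -> is_affine h ->
  aconj (amul g h) m = aconj g (aconj h m).
Proof. by move=> u v; rewrite /aconj ainv_amul // !amulA. Qed.
Lemma aconj1 m : aconj (aone R) m = m.
Proof. by rewrite /aconj ainv1 amulg1 amul1g. Qed.
Lemma aconjK g m : is_affine g -> aconj (ainv g) (aconj g m) = m.
Proof.
move=> u; rewrite -aconj_comp ?amulVg ?aconj1 //; exact: ainv_affine.
Qed.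
Lemma aconjVK g m : is_affine g -> aconj g (aconj (ainv g) m) = m.
Proof.
move=> u; rewrite -aconj_comp ?amulV ?aconj1 //; exact: ainv_affine.
Qed.
Lemma aconj_affine g m : is_affine g -> is_affine m -> is_affine (aconj g m).
Proof. by move=> u v; rewrite /aconj; repeat apply: amul_affine => //; apply: ainv_affine. Qed.

Definition tr (v : pt R) : aff R := (v, 1%:M).
Lemma tr_affine v : is_affine (tr v).
Proof. exact: unitmx1. Qed.
Lemma tr_add v w : amul (tr v) (tr w) = tr (v + w).
Proof. by rewrite /amul /tr /= mul1mx mulmx1. Qed.
Lemma aconj_tr g v : is_affine g -> aconj g (tr v) = tr (g.2 *m v).
Proof.
case: g => a A; rewrite /is_affine /aconj /amul /ainv /tr /= => u.
rewrite mulmx1 mulmxV // mulmxN mulmxA mulmxV // mul1mx.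
by congr pair; rewrite addrC addrA addNr add0r.
Qed.
Lemma aconj_lin g a A : is_affine g -> aconj g (a, A) =
  (g.1 + g.2 *m a - g.2 *m A *m invmx g.2 *m g.1, g.2 *m A *m invmx g.2).
Proof.
case: g => b B; rewrite /is_affine /aconj /amul /ainv /= => u.
by rewrite mulmxN !mulmxA.
Qed.

End W2.


Section W3.
Variable R : realType.
Implicit Types g h k m n : aff R.
Notation Sv := (@Sv R).
Notation Sm := (@Sm R).

Definition wI := Sm 1 0 0 1.
Definition wR := Sm (-(1/2)) (-(1/2)) (1/2) (-(1/2)).
Definition wR2 := Sm (-(1/2)) (1/2) (-(1/2)) (-(1/2)).
Definition w0 := Sm 1 0 0 (-1).
Definition w60 := Sm (-(1/2)) (1/2) (1/2) (1/2).
Definition w120 := Sm (-(1/2)) (-(1/2)) (-(1/2)) (1/2).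
Definition wF := Sm (-1) 0 0 1.

Definition inW (A : 'M[R]_2) : Prop :=
  A = wI \/ A = wR \/ A = wR2 \/ A = w0 \/ A = w60 \/ A = w120.

Definition lat (a c : int) : pt R := Sv (3/2 * a%:~R) (a%:~R/2 + c%:~R).
Definition inL (v : pt R) : Prop := exists a c, v = lat a c.
Definition e1 := lat 1 0.
Definition e2 := lat 0 1.


Local Ltac smeq := first [apply: Sm_eq; lra | apply: Sv_eq; lra].
Local Ltac pickW := rewrite /inW /wI /wR /wR2 /w0 /w60 /w120;
  first [left; smeq | right; pickW | smeq].

Lemma inW_wI : inW wI. Proof. by left. Qed.
Lemma inW_1 : inW 1%:M. Proof. by rewrite Sm_1; left. Qed.

Lemma W_mul A B : inW A -> inW B -> inW (A *m B).
Proof.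
rewrite /inW /wI /wR /wR2 /w0 /w60 /w120.
by move=> [->|[->|[->|[->|[->|->]]]]] [->|[->|[->|[->|[->|->]]]]]; rewrite Sm_mul; pickW.
Qed.

Lemma W_inv A : inW A -> inW (invmx A) /\ A \in unitmx.
Proof.
have H : forall B C, B *m C = 1%:M -> inW C -> inW (invmx B) /\ B \in unitmx.
  by move=> B C e w; rewrite (inv_right e); split => //; case: (mulmx1_unit e).
rewrite /inW /wI /wR /wR2 /w0 /w60 /w120.
move=> [->|[->|[->|[->|[->|->]]]]].
- by apply: (H _ (Sm 1 0 0 1)); [rewrite Sm_mul Sm_1; smeq|pickW].
- by apply: (H _ (Sm (-(1/2)) (1/2) (-(1/2)) (-(1/2)))); [rewrite Sm_mul Sm_1; smeq|pickW].
- by apply: (H _ (Sm (-(1/2)) (-(1/2)) (1/2) (-(1/2)))); [rewrite Sm_mul Sm_1; smeq|pickW].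
- by apply: (H _ (Sm 1 0 0 (-1))); [rewrite Sm_mul Sm_1; smeq|pickW].
- by apply: (H _ (Sm (-(1/2)) (1/2) (1/2) (1/2))); [rewrite Sm_mul Sm_1; smeq|pickW].
- by apply: (H _ (Sm (-(1/2)) (-(1/2)) (-(1/2)) (1/2))); [rewrite Sm_mul Sm_1; smeq|pickW].
Qed.

Lemma W_unit A : inW A -> A \in unitmx.
Proof. by case/W_inv. Qed.

Lemma L_lat a c : inL (lat a c). Proof. by exists a, c. Qed.
Lemma L_0 : inL 0. Proof. by exists 0, 0; rewrite Sv_0 /lat; smeq. Qed.
Lemma L_add v w : inL v -> inL w -> inL (v + w).
Proof.
move=> [a [c ->]] [a' [c' ->]]; exists (a + a'), (c + c').
by rewrite /lat Sv_add; smeq.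
Qed.
Lemma L_opp v : inL v -> inL (- v).
Proof. by move=> [a [c ->]]; exists (- a), (- c); rewrite /lat Sv_opp; smeq. Qed.
Lemma L_sub v w : inL v -> inL w -> inL (v - w).
Proof. by move=> h1 h2; apply: L_add => //; apply: L_opp. Qed.

Lemma lat_comb a c : lat a c = a%:~R *: e1 + c%:~R *: e2.
Proof. by rewrite /lat /e1 /e2 /lat !Sv_scale Sv_add; smeq. Qed.

Lemma L_lin (A : 'M[R]_2) p q r s : A *m e1 = lat p q -> A *m e2 = lat r s ->
  forall v, inL v -> inL (A *m v).
Proof.
move=> h1 h2 v [a [c ->]]; rewrite lat_comb mulmxDr -!scalemxAr h1 h2.
exists (a * p + c * r), (a * q + c * s); rewrite /lat !Sv_scale Sv_add; smeq.
Qed.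

Lemma W_L A v : inW A -> inL v -> inL (A *m v).
Proof.
rewrite /inW /wI /wR /wR2 /w0 /w60 /w120 /e1 /e2 /lat.
move=> [->|[->|[->|[->|[->|->]]]]].
- by apply: (@L_lin _ 1 0 0 1); rewrite Sm_mulv; smeq.
- by apply: (@L_lin _ (-1) 1 (-1) 0); rewrite Sm_mulv; smeq.
- by apply: (@L_lin _ 0 (-1) 1 (-1)); rewrite Sm_mulv; smeq.
- by apply: (@L_lin _ 1 (-1) 0 (-1)); rewrite Sm_mulv; smeq.
- by apply: (@L_lin _ 0 1 1 0); rewrite Sm_mulv; smeq.
- by apply: (@L_lin _ (-1) 0 (-1) 1); rewrite Sm_mulv; smeq.
Qed.

Lemma wF_L v : inL v -> inL (wF *m v).
Proof. by apply: (@L_lin _ (-1) 1 0 1); rewrite /wF /e1 /e2 /lat Sm_mulv; smeq. Qed.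

Ltac conv := rewrite /Sv /Sm; have hs := s3s R;
  rewrite ?vec2_outer ?mx2_scale ?mx2_1 ?mx2_opp ?mx2_add ?mx2_mulv ?vec2_opp ?vec2_add;
  try (congr pair); try (congr vec2; lra); try (congr mx2; lra).

Lemma P0E : P0 R = Sv 0 0. Proof. rewrite /P0; conv. Qed.
Lemma P1E : P1 R = Sv 1 0. Proof. rewrite /P1; conv. Qed.
Lemma P2E : P2 R = Sv (1/2) (1/2). Proof. rewrite /P2; conv. Qed.
Lemma r01E : r01 R = (Sv 0 0, w0).
Proof. rewrite /r01 /refl /P0 /w0; conv. Qed.
Lemma r02E : r02 R = (Sv 0 0, w60).
Proof. rewrite /r02 /refl /P0 /w60; conv. Qed.
Lemma r12E : r12 R = (e1, w120).
Proof. rewrite /r12 /refl /P1 /w120 /e1 /lat; conv. Qed.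
Lemma trefE : tref R = (Sv 1 0, wF).
Proof. rewrite /tref /refl /wF; conv. Qed.
Lemma rot3E : rot3 R = (Sv 1 0, wR).
Proof. rewrite /rot3 /about /mx2 /wR; conv. Qed.

End W3.
Ltac smeq := first [apply: Sm_eq; lra | apply: Sv_eq; lra].
Ltac pickW := rewrite /inW /wI /wR /wR2 /w0 /w60 /w120;
  first [left; smeq | right; pickW | smeq].

Ltac unw := try rewrite /wI; try rewrite /wR; try rewrite /wR2; try rewrite /w0;
  try rewrite /w60; try rewrite /w120; try rewrite /wF.



Section W4.
Variable R : realType.
Implicit Types g h k m n : aff R.
Notation Sv := (@Sv R).
Notation Sm := (@Sm R).
Notation inM := (@inM R).
Notation inW := (@inW R).
Notation inL := (@inL R).
Notation wI := (@wI R). Notation wR := (@wR R). Notation wR2 := (@wR2 R).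
Notation w0 := (@w0 R). Notation w60 := (@w60 R). Notation w120 := (@w120 R). Notation wF := (@wF R).

Lemma inM_mul m n : inM m -> inM n -> inM (amul m n).
Proof. exact: gen_mul. Qed.
Lemma inM_inv m : inM m -> inM (ainv m).
Proof. exact: gen_inv. Qed.
Lemma inM_one : inM (aone R).
Proof. exact: gen_one. Qed.
Lemma inM_r01 : inM (r01 R). Proof. by apply: gen_in; left. Qed.
Lemma inM_r02 : inM (r02 R). Proof. by apply: gen_in; right; left. Qed.
Lemma inM_r12 : inM (r12 R). Proof. by apply: gen_in; right; right. Qed.

Lemma M_char1 m : inM m -> inW m.2 /\ inL m.1.
Proof.
elim => {m} [g [->|[->|->]]| | g h _ [wg lg] _ [wh lh] | g _ [wg lg]].
- by rewrite r01E; split; [pickW|rewrite -Sv_0; apply: L_0].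
- by rewrite r02E; split; [pickW|rewrite -Sv_0; apply: L_0].
- by rewrite r12E; split; [pickW|apply: L_lat].
- by split; [apply: inW_1|apply: L_0].
- split; first exact: W_mul.
  by apply: L_add => //; apply: W_L.
- have [wi _] := W_inv wg; split => //.
  by apply: L_opp; apply: W_L.
Qed.

Lemma inM_affine m : inM m -> is_affine m.
Proof. by move=> /M_char1 [w _]; apply: W_unit. Qed.

Lemma inM_tr_inv v : inM (tr v) -> inM (tr (- v)).
Proof.
move=> h; have -> : tr (- v) = ainv (tr v).
  by rewrite /ainv /tr /= invmx1 mul1mx.
exact: inM_inv.
Qed.

Lemma inM_tr_int v : inM (tr v) -> forall z : int, inM (tr (z%:~R *: v)).
Proof.
move=> h.
have hn : forall k : nat, inM (tr (k%:R *: v)).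
  elim => [|k ih]; first by rewrite scale0r; exact: inM_one.
  rewrite mulrSr scalerDl scale1r -tr_add; exact: inM_mul.
case => k; first by rewrite -pmulrn; apply: hn.
rewrite NegzE mulrNz scaleNr; apply: inM_tr_inv.
by rewrite -pmulrn; apply: hn.
Qed.

Lemma inM_0A A : inW A -> inM (0, A).
Proof.
have e0 : (0 : pt R) = Sv 0 0 by rewrite Sv_0.
have H1 : inM (0, w0) by rewrite e0 -r01E; exact: inM_r01.
have H2 : inM (0, w60) by rewrite e0 -r02E; exact: inM_r02.
have Hm : forall X Y, inM (0, X) -> inM (0, Y) -> inM (0, X *m Y).
  move=> X Y a b; have := inM_mul a b; by rewrite /amul /= mulmx0 addr0.
rewrite /inW.
move=> [->|[->|[->|[->|[->|->]]]]] //.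
- by rewrite /wI -Sm_1; exact: inM_one.
- have -> : wR = w60 *m w0 by rewrite /wR /w60 /w0 Sm_mul; smeq.
  exact: Hm.
- have -> : wR2 = w0 *m w60 by rewrite /wR2 /w60 /w0 Sm_mul; smeq.
  exact: Hm.
- have -> : w120 = w0 *m w60 *m w0 by rewrite /w120 /w60 /w0 !Sm_mul; smeq.
  by apply: (Hm) => //; apply: Hm.
Qed.

Lemma inM_tr_e1 : inM (tr (e1 R)).
Proof.
have := inM_mul inM_r12 (inM_0A (or_intror (or_intror (or_intror (or_intror (or_intror erefl)))))).
rewrite r12E /amul /tr /= mulmx0 addr0.
by have -> : w120 *m w120 = 1%:M :> 'M[R]_2 by rewrite /w120 Sm_mul Sm_1; smeq.
Qed.

Lemma inM_tr_e2 : inM (tr (e2 R)).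
Proof.
have h := inM_mul inM_r01 (inM_mul inM_tr_e1 inM_r01).
have e : amul (r01 R) (amul (tr (e1 R)) (r01 R)) = tr (w0 *m e1 R).
  rewrite r01E /amul /tr /= -Sv_0 ?mulmx1 ?mulmx0 ?addr0 ?add0r mul1mx.
  by have -> : w0 *m w0 = 1%:M :> 'M[R]_2 by rewrite /w0 Sm_mul Sm_1; smeq.
rewrite e in h.
have := inM_mul inM_tr_e1 (inM_tr_inv h); rewrite tr_add.
suff -> : e1 R - w0 *m e1 R = e2 R by [].
by rewrite /e1 /e2 /lat /w0 Sm_mulv Sv_sub; smeq.
Qed.

Lemma inM_tr v : inL v -> inM (tr v).
Proof.
move=> [a [c ->]]; rewrite lat_comb -tr_add.
by apply: inM_mul; apply: inM_tr_int; [exact: inM_tr_e1|exact: inM_tr_e2].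
Qed.

Lemma M_char2 b A : inW A -> inL b -> inM (b, A).
Proof.
move=> w l; have := inM_mul (inM_tr l) (inM_0A w).
by rewrite /amul /tr /= mulmx0 addr0 mul1mx.
Qed.

Lemma M_char m : inM m <-> inW m.2 /\ inL m.1.
Proof.
split; first exact: M_char1.
by case: m => b A [w l]; apply: M_char2.
Qed.

End W4.


Ltac solveL := rewrite /inL /lat;
  first [ exists 0, 0; smeq | exists 1, 0; smeq | exists 0, 1; smeq | exists (-1), 0; smeq
        | exists 0, (-1); smeq | exists 1, (-1); smeq | exists (-1), 1; smeq
        | exists 1, 1; smeq | exists (-1), (-1); smeq ].

Section W5.
Variable R : realType.
Implicit Types g h k m n : aff R.
Notation Sv := (@Sv R).
Notation Sm := (@Sm R).
Notation inM := (@inM R).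
Notation inW := (@inW R).
Notation inL := (@inL R).
Notation inNA := (@inNA R).
Notation wI := (@wI R). Notation wR := (@wR R). Notation wR2 := (@wR2 R).
Notation w0 := (@w0 R). Notation w60 := (@w60 R). Notation w120 := (@w120 R). Notation wF := (@wF R).

Lemma Sm_affine x y a b c d : a*d - 3*b*c != 0 -> is_affine (Sv x y, Sm a b c d).
Proof. exact: Sm_unit. Qed.

Lemma aconj_S D x y a b c d (m : aff R) : a*d - 3*b*c = D -> D != 0 ->
  aconj (Sv x y, Sm a b c d) m =
  (Sv x y + Sm a b c d *m m.1 - Sm a b c d *m m.2 *m
     Sm (d/D) (-b/D) (-c/D) (a/D) *m Sv x y,
   Sm a b c d *m m.2 *m Sm (d/D) (-b/D) (-c/D) (a/D)).
Proof.
move=> <- h; case: m => v A; rewrite aconj_lin; last exact: Sm_affine.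
by rewrite /= Sm_inv.
Qed.

Lemma conj_gen g : is_affine g -> inM (aconj g (r01 R)) -> inM (aconj g (r02 R)) ->
  inM (aconj g (r12 R)) -> forall m, inM m -> inM (aconj g m).
Proof.
move=> u h1 h2 h3 m; elim => {m} [m [->|[->|->]] // | | m n hm ihm hn ihn | m hm ihm].
- by rewrite /aconj amulg1 amulV //; exact: inM_one.
- by rewrite aconj_mul //; apply: inM_mul.
- by rewrite aconj_inv //; [apply: inM_inv | apply: inM_affine].
Qed.

Lemma NA_of g : is_affine g -> (forall m, inM m -> inM (aconj g m)) ->
  (forall m, inM m -> inM (aconj (ainv g) m)) -> inNA g.
Proof.
move=> u h1 h2; split => // m; split; first exact: h1.
by move=> /h2; rewrite aconjK.
Qed.

Lemma NA_affine g : inNA g -> is_affine g. Proof. by case. Qed.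
Lemma NA_conj g m : inNA g -> inM m -> inM (aconj g m).
Proof. by case=> _ h /h. Qed.
Lemma NA_conj_inv g m : inNA g -> inM (aconj g m) -> inM m.
Proof. by case=> _ h H; apply/h. Qed.

Lemma NA_inv g : inNA g -> inNA (ainv g).
Proof.
move=> [u h]; split; first exact: ainv_affine.
move=> m; have := h (aconj (ainv g) m); rewrite aconjVK //; tauto.
Qed.

Lemma NA_mul g h : inNA g -> inNA h -> inNA (amul g h).
Proof.
move=> [u hg] [v hh]; split; first exact: amul_affine.
by move=> m; rewrite aconj_comp // (hh m) (hg (aconj h m)).
Qed.

Lemma NA_one : inNA (aone R).
Proof. split; first exact: aone_affine. by move=> m; rewrite aconj1. Qed.

Lemma M_NA m : inM m -> inNA m.
Proof.
move=> hm; have u := inM_affine hm.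
apply: NA_of => // n hn; rewrite /aconj;
  by repeat first [apply: inM_mul | apply: inM_inv | assumption].
Qed.

Lemma NA_apow g i : inNA g -> inNA (apow g i).
Proof. move=> h; elim: i => [|i ih] /=; [exact: NA_one | exact: NA_mul]. Qed.

Ltac conjM d := rewrite ?r01E ?r02E ?r12E /e1 /lat (aconj_S (D := d)) /=; [|lra|apply/eqP; lra];
  rewrite ?Sm_mul ?Sm_mulv ?Sv_add ?Sv_sub; apply: M_char2; [pickW | solveL].

Lemma ainv_S D x y a b c d : a*d - 3*b*c = D -> D != 0 ->
  ainv (Sv x y, Sm a b c d) =
  (- (Sm (d/D) (-b/D) (-c/D) (a/D) *m Sv x y), Sm (d/D) (-b/D) (-c/D) (a/D)).
Proof. by move=> <- h; rewrite /ainv /= Sm_inv. Qed.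

Lemma tref_NA : inNA (tref R).
Proof.
rewrite trefE.
have e : ainv (Sv 1 0, wF) = (Sv 1 0, wF).
  rewrite /wF (ainv_S (D := -1)); [|lra|apply/eqP; lra].
  rewrite Sm_mulv Sv_opp; congr (_, _); smeq.
have u : is_affine (Sv 1 0, wF) by rewrite /wF; apply: Sm_affine; apply/eqP; lra.
apply: NA_of => //; rewrite ?e; apply: conj_gen => //; rewrite /wF; conjM (-1 : R).
Qed.

Lemma rot3_NA : inNA (rot3 R).
Proof.
rewrite rot3E.
have e : ainv (Sv 1 0, wR) = (Sv (1/2) (1/2), wR2).
  rewrite /wR /wR2 (ainv_S (D := 1)); [|lra|apply/eqP; lra].
  rewrite Sm_mulv Sv_opp; congr (_, _); smeq.
have u : is_affine (Sv 1 0, wR) by rewrite /wR; apply: Sm_affine; apply/eqP; lra.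
apply: NA_of => //; rewrite ?e; apply: conj_gen.
- by rewrite /wR; apply: Sm_affine; apply/eqP; lra.
- rewrite /wR; conjM (1 : R).
- rewrite /wR; conjM (1 : R).
- rewrite /wR; conjM (1 : R).
- by rewrite /wR2; apply: Sm_affine; apply/eqP; lra.
- rewrite /wR2; conjM (1 : R).
- rewrite /wR2; conjM (1 : R).
- rewrite /wR2; conjM (1 : R).
Qed.

End W5.


Definition rotv (k : nat) : nat := (k.+1 %% 3)%N.
Definition trefv (k : nat) : nat := if k == 0%N then 1%N else if k == 1%N then 0%N else 2%N.
Definition fS (i j k : nat) : nat := iter i trefv (iter j rotv k).

Section W6.
Variable R : realType.
Implicit Types g h m : aff R.
Notation Sv := (@Sv R).
Notation Sm := (@Sm R).
Notation inM := (@inM R).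
Notation inW := (@inW R).
Notation inL := (@inL R).
Notation inNA := (@inNA R).
Notation wI := (@wI R). Notation wR := (@wR R). Notation wR2 := (@wR2 R).
Notation w0 := (@w0 R). Notation w60 := (@w60 R). Notation w120 := (@w120 R). Notation wF := (@wF R).

Definition V (k : nat) : pt R :=
  if k == 0%N then Sv 0 0 else if k == 1%N then Sv 1 0 else Sv (1/2) (1/2).

Lemma intr_eq (z w : int) : (z%:~R : R) = w%:~R -> z = w.
Proof. by move/eqP; rewrite eqr_int => /eqP. Qed.

Lemma L_first x y : inL (Sv x y) -> exists a : int, 2 * x = (3 * a)%:~R.
Proof. by move=> [a [c /Sv_inj [-> _]]]; exists a; lra. Qed.

Ltac int3 a := first [ have /intr_eq : (3 * a)%:~R = (-2)%:~R :> R by lra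
  | have /intr_eq : (3 * a)%:~R = (-1)%:~R :> R by lra
  | have /intr_eq : (3 * a)%:~R = (1)%:~R :> R by lra
  | have /intr_eq : (3 * a)%:~R = (2)%:~R :> R by lra ]; lia.

Lemma Vdiff k l : (k < 3)%N -> (l < 3)%N -> inL (V k - V l) -> k = l.
Proof.
rewrite /V; case: k => [|[|[|k]]] // _; case: l => [|[|[|l]]] // _ /=;
  rewrite Sv_sub => /L_first [a ha] //; int3 a.
Qed.

Lemma Vmove m k : inM m -> (k < 3)%N -> inL (app m (V k) - V k).
Proof.
case: m => b A /M_char [/= w l] hk; rewrite /app /= -addrA; apply: L_add => //.
move: w; rewrite /inW /wI /wR /wR2 /w0 /w60 /w120 /V.
by case: k hk => [|[|[|k]]] // _ /=; move=> [->|[->|[->|[->|[->|->]]]]];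
  rewrite Sm_mulv Sv_sub; solveL.
Qed.

Lemma V_lt k : (k < 3)%N -> (rotv k < 3)%N /\ (trefv k < 3)%N.
Proof. by case: k => [|[|[|k]]]. Qed.

Lemma rot3_V k : (k < 3)%N -> app (rot3 R) (V k) = V (rotv k).
Proof.
rewrite rot3E /app /V /wR /=.
by case: k => [|[|[|k]]] // _ /=; rewrite Sm_mulv Sv_add; smeq.
Qed.
Lemma tref_V k : (k < 3)%N -> app (tref R) (V k) = V (trefv k).
Proof.
rewrite trefE /app /V /wF /=.
by case: k => [|[|[|k]]] // _ /=; rewrite Sm_mulv Sv_add; smeq.
Qed.

Lemma iter_lt f k n : (forall k, (k < 3)%N -> (f k < 3)%N) -> (k < 3)%N -> (iter n f k < 3)%N.
Proof. by move=> hf hk; elim: n => [|n ih] //=; apply: hf. Qed.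

Lemma apow_S g n x : app (apow g n.+1) x = app g (app (apow g n) x).
Proof. by rewrite /apow iterS app_amul. Qed.

Lemma app_pow g f n k : (forall k, (k < 3)%N -> (f k < 3)%N) ->
  (forall k, (k < 3)%N -> app g (V k) = V (f k)) -> (k < 3)%N ->
  app (apow g n) (V k) = V (iter n f k).
Proof.
move=> hf hg hk; elim: n => [|n ih]; first by rewrite /apow /= app_aone.
by rewrite apow_S ih iterS hg //; apply: iter_lt.
Qed.

Lemma app_S i j k : (k < 3)%N ->
  app (amul (apow (tref R) i) (apow (rot3 R) j)) (V k) = V (fS i j k).
Proof.
move=> hk; rewrite app_amul (app_pow (f := rotv)) //.
- rewrite (app_pow (f := trefv)) //; first by move=> k' /V_lt [].
  + exact: tref_V.
  + by apply: iter_lt => // k' /V_lt [].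
- by move=> k' /V_lt [].
- exact: rot3_V.
Qed.

Lemma fS_lt i j k : (k < 3)%N -> (fS i j k < 3)%N.
Proof. by move=> hk; apply: iter_lt; [move=> k' /V_lt []|apply: iter_lt => // k' /V_lt []]. Qed.

Lemma S_inj i j i' j' : (i < 2)%N -> (j < 3)%N -> (i' < 2)%N -> (j' < 3)%N ->
  aff_eq (amul (apow (tref R) i) (apow (rot3 R) j))
         (amul (apow (tref R) i') (apow (rot3 R) j')) -> i = i' /\ j = j'.
Proof.
move=> hi hj hi' hj' he.
have H : forall k, (k < 3)%N -> fS i j k = fS i' j' k.
  move=> k hk; have [m [hm e]] := he (V k); rewrite !app_S // in e.
  apply: Vdiff; try exact: fS_lt.
  by rewrite -e; apply: Vmove => //; apply: fS_lt.
have h0 := H 0%N isT; have h1 := H 1%N isT; clear he H; move: h0 h1; rewrite /fS.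
by case: i hi => [|[|i]] // _; case: j hj => [|[|[|j]]] // _;
  case: i' hi' => [|[|i']] // _; case: j' hj' => [|[|[|j']]] // _.
Qed.

End W6.


Section W7.
Variable R : realType.
Implicit Types g h m : aff R.
Notation Sv := (@Sv R).
Notation Sm := (@Sm R).
Notation inM := (@inM R).
Notation inW := (@inW R).
Notation inL := (@inL R).
Notation inNA := (@inNA R).
Notation wI := (@wI R). Notation wR := (@wR R). Notation wR2 := (@wR2 R).
Notation w0 := (@w0 R). Notation w60 := (@w60 R). Notation w120 := (@w120 R). Notation wF := (@wF R).

Lemma aff_eq_of g h k : inM k -> g = amul k h -> aff_eq g h.
Proof. by move=> hk -> x; exists k; split => //; rewrite app_amul. Qed.

Lemma aoneE : aone R = (Sv 0 0, Sm 1 0 0 1).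
Proof. by rewrite /aone -Sv_0 -Sm_1. Qed.

Ltac acomp := rewrite /apow /= ?trefE ?rot3E ?aoneE; try rewrite /wF; try rewrite /wR; try rewrite /wR2; rewrite /amul /=; rewrite ?(Sm_mul, Sm_mulv, Sv_add);
  congr (_, _); smeq.

Lemma tref2 : apow (tref R) 2 = aone R.
Proof. acomp. Qed.
Lemma rot3_3 : apow (rot3 R) 3 = aone R.
Proof. acomp. Qed.
Lemma rel3 : amul (amul (tref R) (rot3 R)) (tref R) = ainv (rot3 R).
Proof.
rewrite trefE rot3E /wF /wR (ainv_S (D := 1)); [|lra|apply/eqP; lra].
rewrite /amul /= !Sm_mul !Sm_mulv Sv_opp !Sv_add; congr (_, _); smeq.
Qed.

Lemma S00 : amul (apow (tref R) 0) (apow (rot3 R) 0) = aone R.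
Proof. by rewrite /apow /= amulg1. Qed.
Lemma S01 : amul (apow (tref R) 0) (apow (rot3 R) 1) = (Sv 1 0, wR).
Proof. acomp. Qed.
Lemma S02 : amul (apow (tref R) 0) (apow (rot3 R) 2) = (Sv (1/2) (1/2), wR2).
Proof. acomp. Qed.
Lemma S10 : amul (apow (tref R) 1) (apow (rot3 R) 0) = (Sv 1 0, wF).
Proof. acomp. Qed.
Lemma S11 : amul (apow (tref R) 1) (apow (rot3 R) 1) = (Sv 0 0, Sm (1/2) (1/2) (1/2) (-(1/2))).
Proof. acomp. Qed.
Lemma S12 : amul (apow (tref R) 1) (apow (rot3 R) 2) = (Sv (1/2) (1/2), Sm (1/2) (-(1/2)) (-(1/2)) (-(1/2))).
Proof. acomp. Qed.

End W7.


Section W8.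
Variable R : realType.
Implicit Types g h m : aff R.
Notation Sv := (@Sv R).
Notation Sm := (@Sm R).
Notation inM := (@inM R).
Notation inW := (@inW R).
Notation inL := (@inL R).
Notation inNA := (@inNA R).
Notation wI := (@wI R). Notation wR := (@wR R). Notation wR2 := (@wR2 R).
Notation w0 := (@w0 R). Notation w60 := (@w60 R). Notation w120 := (@w120 R). Notation wF := (@wF R).
Notation e1 := (@e1 R). Notation e2 := (@e2 R).

Lemma NA_L g v : inNA g -> inL v -> inL (g.2 *m v).
Proof.
move=> hg hv; have := NA_conj hg (inM_tr hv).
rewrite aconj_tr; last exact: NA_affine.
by move=> /M_char [_ /=].
Qed.
Lemma NA_Linv g v : inNA g -> inL v -> inL (invmx g.2 *m v).
Proof. by move=> hg; apply: (NA_L (NA_inv hg)). Qed.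

Lemma NA_img g A0 : inNA g -> inM (0, A0) -> exists A1, inW A1 /\ g.2 *m A0 = A1 *m g.2.
Proof.
move=> hg h; have := NA_conj hg h; rewrite aconj_lin; last exact: NA_affine.
move=> /M_char [/= w _].
exists (g.2 *m A0 *m invmx g.2); split => //.
by rewrite mulmxKV //; apply: NA_affine.
Qed.

Lemma conj_sq (B A0 A1 : 'M[R]_2) : B \in unitmx -> B *m A0 = A1 *m B ->
  A0 *m A0 = 1%:M -> A1 *m A1 = 1%:M.
Proof.
move=> uB h h0; have e : A1 *m A1 *m B = B.
  by rewrite -mulmxA -h mulmxA -h -mulmxA h0 mulmx1.
by rewrite -[A1 *m A1]mulmx1 -(mulmxV uB) mulmxA e mulmxV.
Qed.
Lemma conj_inj (B A0 A0' A1 : 'M[R]_2) : B \in unitmx -> B *m A0 = A1 *m B ->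
  B *m A0' = A1 *m B -> A0 = A0'.
Proof. by move=> uB h h'; rewrite -(mulKmx uB A0) h -h' mulKmx. Qed.
Lemma conj_swap (C X Y : 'M[R]_2) : C \in unitmx -> C *m X = Y *m C ->
  invmx C *m Y = X *m invmx C.
Proof.
move=> uC h; rewrite -[invmx C *m Y]mulmx1 -(mulmxV uC) !mulmxA.
by rewrite -[invmx C *m Y *m C]mulmxA -h mulmxA mulVmx // mul1mx.
Qed.

Lemma comm_scalar (D : 'M[R]_2) : D *m w0 = w0 *m D -> D *m w60 = w60 *m D ->
  D = D 0 0 *: 1%:M.
Proof.
move=> H1 H2; have E := Sm_eta D.
set a := D 0 0 in E *; set b := D 0 1 / s3 R in E; set c := D 1 0 / s3 R in E; set d := D 1 1 in E.
rewrite E /w0 /w60 !Sm_mul in H1 H2; rewrite {1}E Sm_1 Sm_scale.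
move/Sm_inj: H1 => [h1 h2 h3 h4]; move/Sm_inj: H2 => [k1 k2 k3 k4].
apply: Sm_eq; lra.
Qed.

Lemma Bform (B A1 A2 C : 'M[R]_2) : B \in unitmx -> C \in unitmx ->
  B *m w0 = A1 *m B -> B *m w60 = A2 *m B ->
  C *m w0 = A1 *m C -> C *m w60 = A2 *m C -> B = (invmx C *m B) 0 0 *: C.
Proof.
move=> uB uC h1 h2 c1 c2.
have e : invmx C *m B = (invmx C *m B) 0 0 *: 1%:M.
  apply: comm_scalar.
  - by rewrite -mulmxA h1 mulmxA (conj_swap uC c1) mulmxA.
  - by rewrite -mulmxA h2 mulmxA (conj_swap uC c2) mulmxA.
transitivity (C *m (invmx C *m B)); first by rewrite mulKVmx.
by rewrite {1}e -scalemxAr mulmx1.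
Qed.

Lemma W_invol A : inW A -> A *m A = 1%:M ->
  A = 1%:M \/ A = w0 \/ A = w60 \/ A = w120.
Proof.
rewrite Sm_1 /inW /wI /wR /wR2 /w0 /w60 /w120.
move=> [->|[->|[->|[->|[->|->]]]]]; rewrite ?Sm_mul => h.
- by left.
- by exfalso; move/Sm_inj: h => [h _ _ _]; lra.
- by exfalso; move/Sm_inj: h => [h _ _ _]; lra.
- by right; left.
- by right; right; left.
- by right; right; right.
Qed.

Lemma w0_sq : w0 *m w0 = 1%:M.
Proof. by rewrite /w0 Sm_mul Sm_1; smeq. Qed.
Lemma w60_sq : w60 *m w60 = 1%:M.
Proof. by rewrite /w60 Sm_mul Sm_1; smeq. Qed.
Lemma w0_n1 : w0 <> 1%:M.
Proof. by rewrite /w0 Sm_1 => /Sm_inj [_ _ _ h]; lra. Qed.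
Lemma w60_n1 : w60 <> 1%:M.
Proof. by rewrite /w60 Sm_1 => /Sm_inj [h _ _ _]; lra. Qed.
Lemma w0_n60 : w0 <> w60.
Proof. by rewrite /w60 /w0 => /Sm_inj [h _ _ _]; lra. Qed.

Lemma L_scal_e1 (l : R) : inL (l *: e1) -> exists z : int, l = z%:~R.
Proof.
rewrite /e1 /lat Sv_scale => [[a [c /Sv_inj [h _]]]].
by exists a; lra.
Qed.

Lemma int_unit (z z' : int) : (z%:~R : R) * z'%:~R = 1 -> z = 1 \/ z = -1.
Proof.
move=> h; have : z' * z = 1.
  by apply: (@intr_eq R); rewrite intrM mulrC h.
move/intUnitRing.unitzPl; rewrite qualifE => /orP [/eqP ->|/eqP ->]; by [left|right].
Qed.

Local Ltac tryC c a1 a2 h1 h2 := exists c; split; [pickW | apply: (Bform (A1 := a1) (A2 := a2)) => //;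
  first [apply: W_unit; pickW | rewrite h1; unw; rewrite !Sm_mul; smeq | rewrite h2; unw; rewrite !Sm_mul; smeq]].

Lemma classB g : inNA g -> exists lam C, (lam = 1 \/ lam = -1) /\ inW C /\ g.2 = lam *: C.
Proof.
move=> hg; have uB := NA_affine hg; rewrite /is_affine in uB.
have h0 : inM (0, w0) by rewrite Sv_0 -r01E; exact: inM_r01.
have h60 : inM (0, w60) by rewrite Sv_0 -r02E; exact: inM_r02.
have [A1 [wA1 e1B]] := NA_img hg h0.
have [A2 [wA2 e2B]] := NA_img hg h60.
have sA1 := conj_sq uB e1B w0_sq.
have sA2 := conj_sq uB e2B w60_sq.
have n1 : A1 <> 1%:M by move=> E; apply: w0_n1; apply: (conj_inj uB e1B); rewrite E mul1mx mulmx1.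
have n2 : A2 <> 1%:M by move=> E; apply: w60_n1; apply: (conj_inj uB e2B); rewrite E mul1mx mulmx1.
have n12 : A1 <> A2 by move=> E; apply: w0_n60; apply: (conj_inj uB e1B); rewrite E.
suff [C [wC eB]] : exists C, inW C /\ g.2 = (invmx C *m g.2) 0 0 *: C.
  set l := (invmx C *m g.2) 0 0 in eB.
  have uC := W_unit wC.
  have [wCi _] := W_inv wC.
  have [z hz] : exists z : int, l = z%:~R.
    apply: L_scal_e1; have := NA_L hg (W_L wCi (@L_lat R 1 0)).
    by rewrite eB -scalemxAl mulmxA mulmxV // mul1mx.
  have l0 : l != 0.
    apply/eqP => l0; move: uB; rewrite eB l0 scale0r unitmxE det0 unitr0.
    by [].
  have [z' hz'] : exists z' : int, l^-1 = z'%:~R.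
    apply: L_scal_e1; have := NA_Linv hg (W_L wC (@L_lat R 1 0)).
    by rewrite eB invmxZ -?eB // -scalemxAl mulKmx.
  exists l, C; split; last by split.
  have := int_unit (z := z) (z' := z'); rewrite -hz -hz' mulfV // => /(_ erefl).
  by case=> E; [left|right]; rewrite hz E.
have [C1|[C1|[C1|C1]]] := W_invol wA1 sA1;
  (have [C2|[C2|[C2|C2]]] := W_invol wA2 sA2);
  try (by case: (n1 C1)); try (by case: (n2 C2)); try (by exfalso; apply: n12; rewrite C1 C2).
- by tryC (wI : 'M[R]_2) A1 A2 C1 C2.
- by tryC (w0 : 'M[R]_2) A1 A2 C1 C2.
- by tryC (w120 : 'M[R]_2) A1 A2 C1 C2.
- by tryC (wR2 : 'M[R]_2) A1 A2 C1 C2.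
- by tryC (wR : 'M[R]_2) A1 A2 C1 C2.
- by tryC (w60 : 'M[R]_2) A1 A2 C1 C2.
Qed.

End W8.


Section W9.
Variable R : realType.
Implicit Types g h m : aff R.
Notation Sv := (@Sv R).
Notation Sm := (@Sm R).
Notation inM := (@inM R).
Notation inW := (@inW R).
Notation inL := (@inL R).
Notation inNA := (@inNA R).
Notation wI := (@wI R). Notation wR := (@wR R). Notation wR2 := (@wR2 R).
Notation w0 := (@w0 R). Notation w60 := (@w60 R). Notation w120 := (@w120 R). Notation wF := (@wF R).
Notation e1 := (@e1 R). Notation e2 := (@e2 R).

Lemma Lprime v : inL (v - w0 *m v) -> inL (v - w60 *m v) ->
  exists p n : int, v = Sv (p%:~R + n%:~R/2) (n%:~R/2).
Proof.
rewrite [v]Sv_eta; set x := v 0 0; set y := v 1 0 / s3 R.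
rewrite /w0 /w60 !Sm_mulv !Sv_sub.
move=> [a1 [c1 /Sv_inj [h1 h2]]] [a2 [c2 /Sv_inj [k1 k2]]].
exists a2, c1; apply: Sv_eq; lra.
Qed.

Lemma conj_lam g lam C A : g.2 = lam *: C -> lam != 0 -> C \in unitmx ->
  g.2 *m A *m invmx g.2 = C *m A *m invmx C.
Proof.
move=> e l0 uC; have u : lam *: C \in unitmx by rewrite unitmxZ // unitfE.
by rewrite e invmxZ // -scalemxAl -scalemxAl -scalemxAr scalerA mulfV // scale1r.
Qed.

Lemma classA g lam C : inNA g -> g.2 = lam *: C -> lam != 0 -> inW C ->
  exists p n : int, invmx C *m g.1 = Sv (p%:~R + n%:~R/2) (n%:~R/2).
Proof.
move=> hg e l0 wC; have uC := W_unit wC; have [wCi _] := W_inv wC.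
have key : forall A0, inM (0, A0) -> inL (invmx C *m g.1 - A0 *m (invmx C *m g.1)).
  move=> A0 hA; have := NA_conj hg hA; rewrite aconj_lin; last exact: NA_affine.
  move=> /M_char [_ /=]; rewrite mulmx0 addr0 (conj_lam A0 e l0 uC) => hl.
  have := W_L wCi hl; rewrite mulmxBr !mulmxA mulVmx // mul1mx.
  by rewrite -!mulmxA.
apply: Lprime; apply: key.
- by rewrite Sv_0 -r01E; exact: inM_r01.
- by rewrite Sv_0 -r02E; exact: inM_r02.
Qed.

Lemma coset_crit g lam C (a'' s : pt R) (H : 'M[R]_2) D a b c d :
  g.2 = lam *: C -> g.1 = C *m a'' -> inW C -> H = Sm a b c d ->
  a*d - 3*b*c = D -> D != 0 ->
  inW (lam *: Sm (d/D) (-b/D) (-c/D) (a/D)) ->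
  inL (a'' - lam *: (Sm (d/D) (-b/D) (-c/D) (a/D) *m s)) ->
  inM (amul g (ainv (s, H))).
Proof.
move=> e1' e2' wC eH eD D0 wN lN; rewrite /amul /ainv /= eH Sm_inv ?eD // e1' e2'.
apply: M_char2.
- by rewrite -scalemxAl scalemxAr; apply: W_mul.
- rewrite -scalemxAl mulmxN scalerN scalemxAr -mulmxN -mulmxDr; apply: W_L => //.
Qed.

Lemma S00' : amul (apow (tref R) 0) (apow (rot3 R) 0) = (Sv 0 0, Sm 1 0 0 1).
Proof. by rewrite S00 aoneE. Qed.

Local Ltac fin i j Sij D wa wc e hg1 wC :=
  exists i, j; split; [done|split; [done| rewrite Sij; unw;
  apply: (coset_crit (D := D)) e hg1 wC erefl _ _ _ _;
  [lra | apply/eqP; lra | rewrite Sm_scale; pickW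
  | rewrite Sm_mulv Sv_scale Sv_sub; exists wa, wc; rewrite /lat; apply: Sv_eq; lra]]].

Lemma classify g : inNA g -> exists i j, (i < 2)%N /\ (j < 3)%N /\ inM (amul g (ainv (amul (apow (tref R) i) (apow (rot3 R) j)))).
Proof.
move=> hg; have [lam [C [hl [wC e]]]] := classB hg.
have l0 : lam != 0 by case: hl => ->; apply/eqP; lra.
have [p [n ha]] := classA hg e l0 wC.
have hg1 : g.1 = C *m Sv (p%:~R + n%:~R/2) (n%:~R/2) by rewrite -ha mulKVmx //; apply: W_unit.
have Hd := divz_eq (p - n) 3.
have r0 := @modz_ge0 (p - n) 3 isT.
have r3 := @ltz_pmod (p - n) 3 isT.
set q := ((p - n) %/ 3)%Z in Hd; set r := ((p - n) %% 3)%Z in Hd r0 r3.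
have hr : ((p - n)%:~R : R) = (q * 3 + r)%:~R by rewrite {1}Hd.
have : r = 0 \/ r = 1 \/ r = 2 by lia.
case: hl => hl; subst lam; move=> [Er|[Er|Er]]; rewrite Er in hr.
- fin 0%N 0%N S00' (1 : R) (n + 2 * q) (- q) e hg1 wC.
- fin 0%N 1%N S01 (1 : R) (n + 2 * q + 1) (- q) e hg1 wC.
- fin 0%N 2%N S02 (1 : R) (n + 2 * q + 2) (- q - 1) e hg1 wC.
- fin 1%N 1%N S11 (-1 : R) (n + 2 * q) (- q) e hg1 wC.
- fin 1%N 0%N S10 (-1 : R) (n + 2 * q) (- q) e hg1 wC.
- fin 1%N 2%N S12 (-1 : R) (n + 2 * q + 1) (- q - 1) e hg1 wC.
Qed.

End W9.


Section W10.
Variable R : realType.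
Implicit Types g h m : aff R.
Notation Sv := (@Sv R).
Notation Sm := (@Sm R).
Notation inM := (@inM R).
Notation inW := (@inW R).
Notation inL := (@inL R).
Notation inNA := (@inNA R).
Notation wI := (@wI R). Notation wR := (@wR R). Notation wR2 := (@wR2 R).
Notation w0 := (@w0 R). Notation w60 := (@w60 R). Notation w120 := (@w120 R). Notation wF := (@wF R).
Notation e1 := (@e1 R). Notation e2 := (@e2 R).
Notation S i j := (amul (apow (tref R) i) (apow (rot3 R) j)).

Lemma S_NA i j : inNA (S i j).
Proof. by apply: NA_mul; apply: NA_apow; [exact: tref_NA|exact: rot3_NA]. Qed.

Lemma sym_class g : inNA g -> exists i j, (i < 2)%N /\ (j < 3)%N /\ aff_eq g (S i j).
Proof.
move=> hg; have [i [j [hi [hj hk]]]] := classify hg.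
exists i, j; split => //; split => //; apply: (aff_eq_of hk).
by rewrite amulA amulVg ?amulg1 //; apply: NA_affine; apply: S_NA.
Qed.

Lemma Z_lemma s : inNA s -> aff_eq s (aone R) -> inM s.
Proof.
move=> hs he; have [i [j [hi [hj hk]]]] := classify hs.
have uS := NA_affine (S_NA i j).
have hk' := inM_inv hk.
have : aff_eq (S i j) (S 0 0).
  move=> x; have [m [hm em]] := he x; rewrite app_aone in em.
  exists (amul (ainv (amul s (ainv (S i j)))) m); split; first exact: inM_mul.
  have us := NA_affine hs.
  rewrite S00 app_aone app_amul em -app_amul; congr app.
  rewrite ainv_amul //; last exact: ainv_affine.
  by rewrite ainvK // amulA amulVg // amulg1.
move/S_inj => /(_ hi hj isT isT) [ei ej]; subst i j.
by move: hk; rewrite S00 ainv1 amulg1.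
Qed.

Lemma centralizer f : is_affine f -> (forall m, inM m -> aconj f m = m) -> f = aone R.
Proof.
case: f => a B u h.
have hB : forall v, inL v -> B *m v = v.
  move=> v hv; have := h _ (inM_tr hv); rewrite aconj_tr // /tr /= => e.
  by case: e.
have eB : B = 1%:M.
  have k1 := hB _ (@L_lat R 1 0); have k2 := hB _ (@L_lat R 0 1).
  move: k1 k2; rewrite [B]Sm_eta /lat !Sm_mulv Sm_1.
  move=> /Sv_inj [h1 h2] /Sv_inj [h3 h4]; apply: Sm_eq; lra.
subst B.
have ha : forall A0, inM (0, A0) -> a = A0 *m a.
  move=> A0 hA; have := h _ hA; rewrite aconj_lin // /= invmx1 mulmx1 !mul1mx addr0.
  move=> E; have e := f_equal fst E; rewrite /= in e. by apply/eqP; rewrite -subr_eq0 e.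
have h1 : a = w0 *m a by apply: ha; rewrite Sv_0 -r01E; exact: inM_r01.
have h2 : a = w60 *m a by apply: ha; rewrite Sv_0 -r02E; exact: inM_r02.
rewrite /aone; congr (_, _).
move: h1 h2; rewrite [a]Sv_eta /w0 /w60 !Sm_mulv Sv_0.
move=> /Sv_inj [k1 k2] /Sv_inj [k3 k4]; apply: Sv_eq; lra.
Qed.

Lemma aff_out g h : inNA g -> inNA h -> (aff_eq g h <-> out_eq (aconj g) (aconj h)).
Proof.
move=> hg hh; have ug := NA_affine hg; have uh := NA_affine hh.
split.
- move=> he; set s := amul (ainv h) g.
  have hs : inNA s by apply: NA_mul => //; apply: NA_inv.
  have sM : inM s.
    apply: Z_lemma => // y; have [m [hm em]] := he y.
    exists (aconj (ainv h) m); split; first by apply: NA_conj => //; apply: NA_inv.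
    by rewrite app_aone /s app_amul -em /aconj ainvK // !app_amul.
  exists (amul g (ainv h)); split.
    have -> : amul g (ainv h) = aconj h s.
      by rewrite /aconj /s -(amulA h (ainv h) g) amulV // amul1g.
    exact: NA_conj.
  move=> m hm; rewrite -aconj_comp //; last by apply: amul_affine => //; apply: ainv_affine.
  by rewrite amulA amulVg // amulg1.
- move=> [k [hk he]]; have uk := inM_affine hk.
  have ukh : is_affine (amul k h) by apply: amul_affine.
  set f := amul (ainv (amul k h)) g.
  have uf : is_affine f by apply: amul_affine => //; apply: ainv_affine.
  have ef : f = aone R.
    apply: centralizer => // m hm.
    rewrite /f aconj_comp //; last exact: ainv_affine.
    by rewrite he // -(aconj_comp _ uk uh) aconjK.
  apply: (aff_eq_of hk).
  transitivity (amul (amul k h) f); last by rewrite ef amulg1.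
  by rewrite /f -amulA amulV // amul1g.
Qed.

Lemma enorm_Sv x y : enorm (Sv x y) = Num.sqrt (x ^+ 2 + 3 * y ^+ 2).
Proof. by rewrite /enorm /Sv !mxE /= exprMn [s3 R ^+ 2]expr2 s3s. Qed.

Lemma enorm_orth lam C v : (lam = 1 \/ lam = -1) -> inW C -> enorm ((lam *: C) *m v) = enorm v.
Proof.
rewrite [v]Sv_eta; set x : R := v 0 0; set y : R := v 1 0 / s3 R; clearbody x y.
rewrite /inW /wI /wR /wR2 /w0 /w60 /w120.
by move=> [->|->] [->|[->|[->|[->|[->|->]]]]]; rewrite Sm_scale Sm_mulv !enorm_Sv; f_equal; lra.
Qed.

Lemma app_sub g x y : app g x - app g y = g.2 *m (x - y).
Proof. by rewrite /app mulmxBr opprD addrACA subrr add0r. Qed.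

Lemma app_gV g z : is_affine g -> app g (app (ainv g) z) = z.
Proof. by move=> u; rewrite -app_amul amulV // app_aone. Qed.
Lemma app_Vg g z : is_affine g -> app (ainv g) (app g z) = z.
Proof. by move=> u; rewrite -app_amul amulVg // app_aone. Qed.

Lemma isom g : inNA g -> induces_isometry g.
Proof.
move=> hg x y; have ug := NA_affine hg.
have [lam [C [hl [wC e]]]] := classB hg.
rewrite /odist; congr inf; apply/seteqP; split => r /= [m [hm ->]].
- exists (aconj (ainv g) m); split; first by apply: NA_conj => //; apply: NA_inv.
  have -> : app m (app g y) = app g (app (aconj (ainv g) m) y).
    by rewrite /aconj ainvK // !app_amul app_gV.
  by rewrite app_sub e enorm_orth.
- exists (aconj g m); split; first exact: NA_conj.
  have -> : app (aconj g m) (app g y) = app g (app m y).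
    by rewrite /aconj !app_amul app_Vg.
  by rewrite app_sub e enorm_orth.
Qed.

End W10.


Section W11a.
Variable R : realType.
Implicit Types g h m n : aff R.
Notation Sv := (@Sv R).
Notation Sm := (@Sm R).
Notation inM := (@inM R).
Notation inW := (@inW R).
Notation inL := (@inL R).
Notation inNA := (@inNA R).
Notation wI := (@wI R). Notation wR := (@wR R). Notation wR2 := (@wR2 R).
Notation w0 := (@w0 R). Notation w60 := (@w60 R). Notation w120 := (@w120 R). Notation wF := (@wF R).
Notation e1 := (@e1 R). Notation e2 := (@e2 R).

Definition Pcomm m := forall n, inM n -> amul m (aconj n m) = amul (aconj n m) m.

Lemma tr_comm (v w : pt R) : amul (tr v) (tr w) = amul (tr w) (tr v).
Proof. by rewrite !tr_add addrC. Qed.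

Lemma Pcomm_tr (v : pt R) : Pcomm (tr v).
Proof. move=> n hn; rewrite aconj_tr; last exact: inM_affine. by rewrite !tr_add addrC. Qed.

Lemma Pcomm_istr m : inM m -> Pcomm m -> m.2 = 1%:M.
Proof.
case: m => b A /M_char [/= wA lb] P.
have key : forall w, inL w -> b + A *m (w + b - A *m w) = w + b - A *m w + A *m b.
  move=> w lw; have := P _ (inM_tr lw).
  have i1 : invmx (1%:M : 'M[R]_2) = 1%:M by apply: invmx1.
  rewrite aconj_lin; last exact: tr_affine.
  rewrite /tr /amul /= i1 !mul1mx !mulmx1.
  by move=> E; have := f_equal fst E.
have k1 := key _ (@L_lat R 1 0); have k2 := key _ (@L_lat R 0 1).
move: wA k1 k2; rewrite [b]Sv_eta; set x : R := b 0 0; set y : R := b 1 0 / s3 R.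
clearbody x y; rewrite /lat /inW /wI /wR /wR2 /w0 /w60 /w120.
move=> [->|[->|[->|[->|[->|->]]]]]; rewrite ?Sm_1 //;
  rewrite !(Sv_add, Sm_mulv, Sv_sub) => /Sv_inj [h1 h2] /Sv_inj [h3 h4]; exfalso; lra.
Qed.

Lemma find_a (A1 A2 : 'M[R]_2) (c1 c2 : pt R) :
  (A1 = w0 \/ A1 = w60 \/ A1 = w120) -> (A2 = w0 \/ A2 = w60 \/ A2 = w120) -> A1 <> A2 ->
  c1 + A1 *m c1 = 0 -> c2 + A2 *m c2 = 0 ->
  exists a, a - A1 *m a = c1 /\ a - A2 *m a = c2.
Proof.
rewrite [c1]Sv_eta [c2]Sv_eta Sv_0.
set p1 : R := c1 0 0; set q1 : R := c1 1 0 / s3 R; set p2 : R := c2 0 0; set q2 : R := c2 1 0 / s3 R.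
clearbody p1 q1 p2 q2.
move=> [->|[->|->]] [->|[->|->]] // _; rewrite /w0 /w60 /w120 !Sm_mulv !Sv_add;
  move=> /Sv_inj [h1 h2] /Sv_inj [h3 h4].
- exists (Sv (q1/2 - 2*q2) (q1/2)); rewrite !Sm_mulv !Sv_sub; split; apply: Sv_eq; lra.
- exists (Sv (2*q2 - q1/2) (q1/2)); rewrite !Sm_mulv !Sv_sub; split; apply: Sv_eq; lra.
- exists (Sv (q2/2 - 2*q1) (q2/2)); rewrite !Sm_mulv !Sv_sub; split; apply: Sv_eq; lra.
- exists (Sv (q2 - q1) (q1 + q2)); rewrite !Sm_mulv !Sv_sub; split; apply: Sv_eq; lra.
- exists (Sv (2*q1 - q2/2) (q2/2)); rewrite !Sm_mulv !Sv_sub; split; apply: Sv_eq; lra.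
- exists (Sv (q1 - q2) (q1 + q2)); rewrite !Sm_mulv !Sv_sub; split; apply: Sv_eq; lra.
Qed.

Lemma mx_ext (X Y : 'M[R]_2) : X *m e1 = Y *m e1 -> X *m e2 = Y *m e2 -> X = Y.
Proof.
rewrite [X]Sm_eta [Y]Sm_eta /e1 /e2 /lat !Sm_mulv.
move=> /Sv_inj [h1 h2] /Sv_inj [h3 h4]; apply: Sm_eq; lra.
Qed.

Lemma tr_inv (v : pt R) : ainv (tr v) = tr (- v).
Proof.
have i1 : invmx (1%:M : 'M[R]_2) = 1%:M by apply: invmx1.
by rewrite /ainv /tr /= i1 mul1mx.
Qed.

Lemma L_scale v (z : int) : inL v -> inL (z%:~R *: v).
Proof.
move=> [a [c ->]]; exists (z * a), (z * c); rewrite /lat Sv_scale; apply: Sv_eq; lra.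
Qed.

End W11a.


Section W12.
Variable R : realType.
Implicit Types g h m n : aff R.
Notation Sv := (@Sv R).
Notation Sm := (@Sm R).
Notation inM := (@inM R).
Notation inW := (@inW R).
Notation inL := (@inL R).
Notation inNA := (@inNA R).
Notation wI := (@wI R). Notation wR := (@wR R). Notation wR2 := (@wR2 R).
Notation w0 := (@w0 R). Notation w60 := (@w60 R). Notation w120 := (@w120 R). Notation wF := (@wF R).
Notation e1 := (@e1 R). Notation e2 := (@e2 R).

Variable phi : aff R -> aff R.
Hypothesis hM : forall m, inM m -> inM (phi m).
Hypothesis hmul : forall m1 m2, inM m1 -> inM m2 -> phi (amul m1 m2) = amul (phi m1) (phi m2).
Hypothesis hinj : forall m1 m2, inM m1 -> inM m2 -> phi m1 = phi m2 -> m1 = m2.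
Hypothesis hsurj : forall n, inM n -> exists m, inM m /\ phi m = n.

Lemma phi1 : phi (aone R) = aone R.
Proof.
have hx := hM (inM_one R); have ux := inM_affine hx.
have e : amul (phi (aone R)) (phi (aone R)) = phi (aone R).
  by rewrite -hmul ?amul1g //; exact: inM_one.
transitivity (amul (ainv (phi (aone R))) (amul (phi (aone R)) (phi (aone R)))).
  by rewrite -amulA amulVg // amul1g.
by rewrite e amulVg.
Qed.

Lemma phiV m : inM m -> phi (ainv m) = ainv (phi m).
Proof.
move=> hm; apply: ainv_uniq; first exact: inM_affine (hM hm).
by rewrite -hmul ?amulV ?phi1 //; [exact: inM_affine | exact: inM_inv].
Qed.

Lemma phiJ n m : inM n -> inM m -> phi (aconj n m) = aconj (phi n) (phi m).
Proof.
move=> hn hm; rewrite /aconj hmul ?phiV ?hmul //; try exact: inM_inv.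
exact: inM_mul.
Qed.

Lemma Pcomm_phi m : inM m -> Pcomm m -> Pcomm (phi m).
Proof.
move=> hm P n hn; have [n' [hn' <-]] := hsurj hn.
have hX : inM (aconj n' m) by apply: NA_conj => //; apply: M_NA.
by rewrite -phiJ // -!hmul // P.
Qed.

Lemma Pcomm_phi_inv m : inM m -> Pcomm (phi m) -> Pcomm m.
Proof.
move=> hm P n hn.
have hX : inM (aconj n m) by apply: NA_conj => //; apply: M_NA.
apply: hinj; try (apply: inM_mul => //).
rewrite (hmul hm hX) (hmul hX hm) phiJ // P //; exact: hM.
Qed.

Lemma istr_tr m : inM m -> m.2 = 1%:M -> m = tr m.1.
Proof. by case: m => b A _ /= ->. Qed.

Lemma phi_tr v : inL v -> inL (phi (tr v)).1 /\ phi (tr v) = tr (phi (tr v)).1.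
Proof.
move=> hv; have hm := hM (inM_tr hv).
have e := Pcomm_istr hm (Pcomm_phi (inM_tr hv) (@Pcomm_tr R v)).
by split; [case/M_char: hm | apply: istr_tr].
Qed.

Definition f1 := (phi (tr e1)).1.
Definition f2 := (phi (tr e2)).1.
Definition Bm : 'M[R]_2 :=
  Sm (2 * f1 0 0 / 3 - f2 0 0 / 3) (f2 0 0 / 3)
     ((2 * (f1 1 0 / s3 R) - f2 1 0 / s3 R) / 3) (f2 1 0 / s3 R).

Lemma Bm_e1 : Bm *m e1 = f1.
Proof.
rewrite [RHS]Sv_eta /Bm /e1 /lat Sm_mulv.
set a : R := f1 0 0; set b : R := f1 1 0 / s3 R; set c : R := f2 0 0; set d : R := f2 1 0 / s3 R.
clearbody a b c d; apply: Sv_eq; lra.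
Qed.
Lemma Bm_e2 : Bm *m e2 = f2.
Proof.
rewrite [RHS]Sv_eta /Bm /e2 /lat Sm_mulv.
set a : R := f1 0 0; set b : R := f1 1 0 / s3 R; set c : R := f2 0 0; set d : R := f2 1 0 / s3 R.
clearbody a b c d; apply: Sv_eq; lra.
Qed.

Definition Q v := phi (tr v) = tr (Bm *m v).

Lemma Q_e1 : Q e1.
Proof. by rewrite /Q Bm_e1 /f1; case: (phi_tr (@L_lat R 1 0)). Qed.
Lemma Q_e2 : Q e2.
Proof. by rewrite /Q Bm_e2 /f2; case: (phi_tr (@L_lat R 0 1)). Qed.

Lemma Q_add v w : inL v -> inL w -> Q v -> Q w -> Q (v + w).
Proof.
move=> lv lw qv qw; rewrite /Q -tr_add hmul ?qv ?qw; try exact: inM_tr.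
by rewrite tr_add mulmxDr.
Qed.
Lemma Q_opp v : inL v -> Q v -> Q (- v).
Proof.
move=> lv qv; rewrite /Q -tr_inv phiV ?qv; last exact: inM_tr.
by rewrite tr_inv mulmxN.
Qed.
Lemma Q_0 : Q 0.
Proof. by rewrite /Q mulmx0; exact: phi1. Qed.

Lemma Q_int v : inL v -> Q v -> forall z : int, Q (z%:~R *: v).
Proof.
move=> lv qv.
have hn : forall k : nat, Q (k%:R *: v).
  elim => [|k ih]; first by rewrite scale0r; exact: Q_0.
  rewrite mulrSr scalerDl scale1r; apply: Q_add => //.
  by rewrite pmulrn; apply: L_scale.
case => k; first by rewrite -pmulrn; apply: hn.
rewrite NegzE mulrNz scaleNr; apply: Q_opp.
  exact: L_scale.
by rewrite -pmulrn; apply: hn.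
Qed.

Lemma Q_L v : inL v -> Q v.
Proof.
move=> [a [c ->]]; rewrite lat_comb; apply: Q_add; try apply: L_scale; try exact: L_lat.
- by apply: Q_int; [exact: L_lat | exact: Q_e1].
- by apply: Q_int; [exact: L_lat | exact: Q_e2].
Qed.

Lemma phi_pre_tr v : inL v -> exists u, inL u /\ Bm *m u = v.
Proof.
move=> hv; have [n [hn e]] := hsurj (inM_tr hv).
have Pn : Pcomm n by apply: Pcomm_phi_inv => //; rewrite e; exact: Pcomm_tr.
have e2 := Pcomm_istr hn Pn.
have en := istr_tr hn e2.
have [_ ln] := proj1 (M_char n) hn.
exists n.1; split => //.
have := Q_L ln; rewrite /Q -en e => E.
by have := f_equal fst E.
Qed.

Lemma det_nz (a b c d u1 u2 w1 w2 p1 q1 p2 q2 : R) : a*u1 + 3*b*u2 = p1 -> c*u1 + d*u2 = q1 ->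
  a*w1 + 3*b*w2 = p2 -> c*w1 + d*w2 = q2 -> p1 * q2 - p2 * q1 != 0 -> a*d - 3*b*c != 0.
Proof.
move=> h1 h2 h3 h4 hn; apply/eqP => h.
have key : (a*d - 3*b*c) * (u1*w2 - u2*w1) =
  (a*u1 + 3*b*u2) * (c*w1 + d*w2) - (a*w1 + 3*b*w2) * (c*u1 + d*u2) by ring.
rewrite h h1 h2 h3 h4 mul0r in key; move: hn; rewrite -key eqxx //.
Qed.

Lemma Bm_unit : Bm \in unitmx.
Proof.
have [u [_ eu]] := phi_pre_tr (@L_lat R 1 0).
have [w [_ ew]] := phi_pre_tr (@L_lat R 0 1).
move: eu ew; rewrite /Bm [u]Sv_eta [w]Sv_eta /lat !Sm_mulv.
move: (f1 0 0) (f1 1 0) (f2 0 0) (f2 1 0) (u 0 0) (u 1 0) (w 0 0) (w 1 0) => ? ? ? ? ? ? ? ?.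
move=> /Sv_inj [h1 h2] /Sv_inj [h3 h4]; apply: Sm_unit.
apply: (det_nz h1 h2 h3 h4); apply/eqP; lra.
Qed.

Lemma lin_rel m : inM m -> (phi m).2 *m Bm = Bm *m m.2.
Proof.
move=> hm; have [wm _] := proj1 (M_char m) hm; have um := inM_affine hm.
have key : forall v, inL v -> (phi m).2 *m Bm *m v = Bm *m m.2 *m v.
  move=> v hv.
  have E := phiJ hm (inM_tr hv).
  rewrite aconj_tr // in E.
  rewrite (Q_L (W_L wm hv)) (Q_L hv) aconj_tr in E; last exact: inM_affine (hM hm).
  move/(f_equal fst): E; rewrite /tr /= -!mulmxA => ->.
  by [].
by apply: mx_ext; apply: key; exact: L_lat.
Qed.

Lemma r01_sq : amul (r01 R) (r01 R) = aone R.
Proof. by rewrite r01E /amul /= -Sv_0 mulmx0 addr0 w0_sq. Qed.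
Lemma r02_sq : amul (r02 R) (r02 R) = aone R.
Proof. by rewrite r02E /amul /= -Sv_0 mulmx0 addr0 w60_sq. Qed.

Lemma eig m : inM m -> amul m m = aone R -> (phi m).1 + (phi m).2 *m (phi m).1 = 0.
Proof.
move=> hm e; have := hmul hm hm; rewrite e phi1 => E.
by have := f_equal fst E; rewrite /amul /=.
Qed.

Lemma r12_dec : r12 R = amul (tr e1) (amul (r01 R) (amul (r02 R) (r01 R))).
Proof.
rewrite r12E r01E r02E /amul /tr /= -Sv_0 !mulmx0 !addr0 mul1mx.
rewrite mulmx0 !addr0 mul1mx; congr (_, _).
by rewrite /w120 /w0 /w60 !Sm_mul; smeq.
Qed.

Lemma out_surj : exists g, inNA g /\ out_eq phi (aconj g).
Proof.
have uB := Bm_unit.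
have hr1 := inM_r01 R; have hr2 := inM_r02 R.
set A1 := (phi (r01 R)).2; set A2 := (phi (r02 R)).2.
have l1 : A1 *m Bm = Bm *m w0 by rewrite /A1 lin_rel // r01E.
have l2 : A2 *m Bm = Bm *m w60 by rewrite /A2 lin_rel // r02E.
have [wA1 _] := proj1 (M_char _) (hM hr1).
have [wA2 _] := proj1 (M_char _) (hM hr2).
have sA1 := conj_sq uB (esym l1) (w0_sq R).
have sA2 := conj_sq uB (esym l2) (w60_sq R).
have n1 : A1 <> 1%:M by move=> E; apply: w0_n1; apply: (conj_inj uB (esym l1)); rewrite E mul1mx mulmx1.
have n2 : A2 <> 1%:M by move=> E; apply: w60_n1; apply: (conj_inj uB (esym l2)); rewrite E mul1mx mulmx1.
have n12 : A1 <> A2 by move=> E; apply: w0_n60; apply: (conj_inj uB (esym l1)); rewrite E.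
have r1 : A1 = w0 \/ A1 = w60 \/ A1 = w120.
  by case: (W_invol wA1 sA1) => // E; case: (n1 E).
have r2 : A2 = w0 \/ A2 = w60 \/ A2 = w120.
  by case: (W_invol wA2 sA2) => // E; case: (n2 E).
have [a [ha1 ha2]] := find_a r1 r2 n12 (eig hr1 r01_sq) (eig hr2 r02_sq).
set g : aff R := (a, Bm).
have ug : is_affine g by [].
have gen : forall m A0, inM m -> m = (0, A0) -> phi m = (a - (phi m).2 *m a, (phi m).2) ->
    phi m = aconj g m.
  move=> m A0 hm em E.
  have e2 : m.2 = A0 by rewrite em.
  have eA : Bm *m A0 *m invmx Bm = (phi m).2 by rewrite -e2 -(lin_rel hm) mulmxK.
  rewrite {1}E [in RHS]em aconj_lin // /g /= mulmx0 addr0 eA.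
  by [].
have agr : forall m, inM m -> phi m = aconj g m.
  move=> m; elim => {m} [m [->|[->|->]] | | m n hm ihm hn ihn | m hm ihm].
  - apply: (gen _ w0 hr1); first by rewrite r01E -Sv_0.
    by rewrite ha1; case: (phi (r01 R)).
  - apply: (gen _ w60 hr2); first by rewrite r02E -Sv_0.
    by rewrite ha2; case: (phi (r02 R)).
  - have ht := @inM_tr_e1 R.
    have E1 : phi (r01 R) = aconj g (r01 R).
      apply: (gen _ w0 hr1); first by rewrite r01E -Sv_0.
      by rewrite ha1; case: (phi (r01 R)).
    have E2 : phi (r02 R) = aconj g (r02 R).
      apply: (gen _ w60 hr2); first by rewrite r02E -Sv_0.
      by rewrite ha2; case: (phi (r02 R)).
    have Et : phi (tr e1) = aconj g (tr e1) by rewrite aconj_tr // Q_e1.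
    rewrite r12_dec !hmul //; try (repeat apply: inM_mul => //).
    by rewrite !aconj_mul // Et E1 E2.
  - by rewrite phi1 /aconj amulg1 amulV.
  - by rewrite hmul // ihm ihn aconj_mul.
  - by rewrite phiV // ihm aconj_inv //; apply: inM_affine.
exists g; split.
- split => // m; split; first by move=> hm; rewrite -agr //; apply: hM.
  move=> hm; have [m' [hm' e]] := hsurj hm.
  rewrite agr // in e.
  by have := f_equal (aconj (ainv g)) e; rewrite !aconjK // => <-.
- exists (aone R); split; first exact: inM_one.
  by move=> m hm; rewrite aconj1 agr.
Qed.

End W12.


Theorem lemma4 (R : realType) :
  (* t-ref. and 3-rot. are affinities of E^2/M *)
  inNA (tref R) /\ inNA (rot3 R) /\
  (* Sym(M) = Aff(M): every affinity is an isometry of the orbifold *)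
  (forall g : aff R, inNA g -> induces_isometry g) /\
  (* Sym(M) = Aff(M) = <t-ref., 3-rot.> is dihedral of order 6 *)
  (forall g : aff R, inNA g -> exists (i j : nat), (i < 2)%N /\ (j < 3)%N /\
      aff_eq g (amul (apow (tref R) i) (apow (rot3 R) j))) /\
  (forall i j i' j' : nat, (i < 2)%N -> (j < 3)%N -> (i' < 2)%N -> (j' < 3)%N ->
      aff_eq (amul (apow (tref R) i) (apow (rot3 R) j))
             (amul (apow (tref R) i') (apow (rot3 R) j')) -> i = i' /\ j = j') /\
  aff_eq (apow (tref R) 2) (aone R) /\ aff_eq (apow (rot3 R) 3) (aone R) /\
  aff_eq (amul (amul (tref R) (rot3 R)) (tref R)) (ainv (rot3 R)) /\
  (* Omega is a homomorphism ... *)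
  (forall g h : aff R, inNA g -> inNA h -> forall m, inM m ->
      aconj (amul g h) m = aconj g (aconj h m)) /\
  (* ... well defined and injective ... *)
  (forall g h : aff R, inNA g -> inNA h ->
      (aff_eq g h <-> out_eq (aconj g) (aconj h))) /\
  (* ... and surjective onto Out(M) *)
  (forall phi : aff R -> aff R, is_autM phi ->
      exists g, inNA g /\ out_eq phi (aconj g)).
Proof.
have arefl : forall g : aff R, aff_eq g g.
  by move=> g; apply: (aff_eq_of (inM_one R)); rewrite amul1g.
split; first exact: tref_NA.
split; first exact: rot3_NA.
split; first by move=> g hg; apply: isom.
split; first exact: sym_class.
split; first exact: S_inj.
split; first by rewrite tref2.
split; first by rewrite rot3_3.
split; first by rewrite rel3.
split; first by move=> g h hg hh m _; apply: aconj_comp; apply: NA_affine.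
split; first exact: aff_out.
by move=> phi [hM hmul hinj hsurj]; apply: (out_surj hM hmul hinj hsurj).
Qed.
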